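(* Let $M$ be a pointed metric space such that the set $M'$ of cluster (accumulation) points of $M$ is infinite, and let $X$ be a non-zero Banach space. Then $\mathrm{Lip}_0(M,X)$ has the symmetric strong diameter two property.
   Context: All Banach spaces are real. $\mathrm{Lip}_0(M,X)$ is the Banach space of Lipschitz maps $M\to X$ vanishing at the base point, normed by the best Lipschitz constant. A slice of $B_Z$ is a set $\{z\in B_Z: f(z)>1-\alpha\}$ with $f\in Z^*$, $\alpha>0$. A Banach space $Z$ has the symmetric strong diameter two property (SSD2P) if for every $k\in\mathbb N$, every family of slices $S_1,\dots,S_k$ of $B_Z$ and every $\varepsilon>0$ there exist $x_i\in S_i$ ($1\le i\le k$) and $\varphi\in B_Z$ with $\|\varphi\|>1-\varepsilon$ such that $x_i\pm\varphi\in S_i$ for every $i\in\{1,\dots,k\}$. *)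

(* Defs.v *)
From HB Require Import structures.
From mathcomp Require Import all_boot all_order all_algebra.
From mathcomp Require Import all_classical all_reals all_analysis.
Set Implicit Arguments. Unset Strict Implicit. Unset Printing Implicit Defensive.
Import Order.TTheory GRing.Theory Num.Theory.
Import numFieldNormedType.Exports.
Local Open Scope classical_set_scope.
Local Open Scope ring_scope.

(* ---------- Abstract normed space given as a subspace S of a vector space V
   with norm N (used for Z = Lip_0(M,X) inside M -> X). ---------- *)
Section NormedSub.
Context {R : realType} {V : lmodType R} (S : set V) (N : V -> R).

Definition sub_ball : set V := [set z | S z /\ N z <= 1].

(* continuous linear functionals on Z (values outside S are irrelevant) *)
Definition sub_dual (f : V -> R) : Prop :=
  (forall a b u v, S u -> S v -> f (a *: u + b *: v) = a * f u + b * f v) /\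
  (exists C, forall z, S z -> `|f z| <= C * N z).

Definition sub_dual_norm (f : V -> R) : R := sup [set `|f z| | z in sub_ball].

Definition slice (f : V -> R) (alpha : R) : set V :=
  [set z | sub_ball z /\ 1 - alpha < f z].

Definition SSD2P : Prop :=
  forall (k : nat) (f : 'I_k -> V -> R) (alpha : 'I_k -> R) (eps : R),
    (forall i, sub_dual (f i) /\ sub_dual_norm (f i) = 1) ->
    (forall i, 0 < alpha i) -> 0 < eps ->
    exists (x : 'I_k -> V) (phi : V),
      [/\ forall i, slice (f i) (alpha i) (x i),
          sub_ball phi, 1 - eps < N phi &
          forall i, slice (f i) (alpha i) (x i + phi) /\
                    slice (f i) (alpha i) (x i - phi)].
End NormedSub.

Section Lip.
Context {R : realType} {M : metricType R} {X : normedModType R}.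

Definition lipschitz_map (f : M -> X) : Prop :=
  exists L : R, forall x y, `|f x - f y| <= L * mdist x y.

Definition Lip0 (x0 : M) : set (M -> X) :=
  [set f | lipschitz_map f /\ f x0 = 0].

Definition lip_norm (f : M -> X) : R :=
  sup [set `|f xy.1 - f xy.2| / mdist xy.1 xy.2 | xy in [set xy : M * M | xy.1 != xy.2]].
End Lip.

Definition cluster_points {R : realType} (M : metricType R) : set M :=
  [set x | forall e : R, 0 < e -> exists y : M, y != x /\ mdist x y < e].
Arguments cluster_points {R} M.

(* Main.v *)
Require Import Defs.
From HB Require Import structures.
From mathcomp Require Import all_boot all_order all_algebra.
From mathcomp Require Import all_classical all_reals all_analysis.
Import Order.TTheory GRing.Theory Num.Theory.
Import numFieldNormedType.Exports.
Local Open Scope classical_set_scope.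
Local Open Scope ring_scope.
Section LipLemmas.
Context {R : realType} {M : metricType R} {X : normedModType R}.
Local Set Implicit Arguments.
Implicit Types (f g : M -> X).

Definition ratioset f : set R :=
  [set `|f xy.1 - f xy.2| / mdist xy.1 xy.2 | xy in [set xy : M * M | xy.1 != xy.2]].

Lemma lip_normE f : lip_norm f = sup (ratioset f). Proof. by []. Qed.

Lemma ratioset_ge0 f r : ratioset f r -> 0 <= r.
Proof. by move=> [xy _ <-]; rewrite divr_ge0 // mdist_ge0. Qed.

Lemma ratioset_ub f L : (forall x y, `|f x - f y| <= L * mdist x y) ->
  ubound (ratioset f) L.
Proof.
move=> H r [[x y] /= xy <-].
have d0 : 0 < mdist x y by rewrite mdist_gt0.
by rewrite ler_pdivrMr.
Qed.

Lemma lip_le f L : (forall x y, `|f x - f y| <= L * mdist x y) -> 0 <= L ->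
  lip_norm f <= L.
Proof.
move=> H L0; rewrite lip_normE.
have [ne|e] := pselect (ratioset f !=set0).
  by apply: ge_sup => //; apply: ratioset_ub.
have -> : ratioset f = set0.
  by apply/seteqP; split => // r Hr; apply: e; exists r.
by rewrite sup0.
Qed.

Lemma lip_norm_ge0 f : lipschitz_map f -> 0 <= lip_norm f.
Proof.
move=> [L HL]; rewrite lip_normE.
have [[r Hr]|e] := pselect (ratioset f !=set0).
  have := ratioset_ge0 Hr => r0; apply: le_trans r0 _.
  apply: ub_le_sup => //; by exists L; apply: ratioset_ub.
have -> : ratioset f = set0.
  by apply/seteqP; split => // r Hr; apply: e; exists r.
by rewrite sup0.
Qed.

Lemma lipE f x y : lipschitz_map f -> `|f x - f y| <= lip_norm f * mdist x y.
Proof.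
move=> Hf; have [->|xy] := eqVneq x y.
  by rewrite subrr normr0 mdistxx mulr0.
have d0 : 0 < mdist x y by rewrite mdist_gt0.
rewrite -ler_pdivrMr //.
case: Hf => L HL; apply: ub_le_sup; first by exists L; apply: ratioset_ub.
by exists (x, y).
Qed.

Lemma lip_ge f x y : lipschitz_map f -> x != y ->
  `|f x - f y| / mdist x y <= lip_norm f.
Proof.
move=> Hf xy; have d0 : 0 < mdist x y by rewrite mdist_gt0.
by rewrite ler_pdivrMr // lipE.
Qed.

Lemma Lip0_comb x0 a b f g : Lip0 x0 f -> Lip0 x0 g -> Lip0 x0 (a *: f + b *: g).
Proof.
move=> [[Lf Hf] f0] [[Lg Hg] g0]; split; last first.
  by change (a *: f x0 + b *: g x0 = 0); rewrite f0 g0 !scaler0 addr0.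
exists (`|a| * Lf + `|b| * Lg) => x y.
change (`|a *: f x + b *: g x - (a *: f y + b *: g y)| <= (`|a| * Lf + `|b| * Lg) * mdist x y).
rewrite opprD addrACA -!scalerBr mulrDl.
apply: (le_trans (ler_normD _ _)); apply: lerD; rewrite normrZ -mulrA;
  by apply: ler_wpM2l.
Qed.

Lemma Lip0_0 x0 : Lip0 x0 (0 : M -> X).
Proof. by split => //; exists 0 => x y /=; rewrite subrr normr0 mul0r. Qed.

End LipLemmas.
Section DualLemmas.
Context {R : realType} {M : metricType R} {X : normedModType R} (x0 : M).
Local Set Implicit Arguments.
Local Notation S := (Lip0 (X := X) x0).

Lemma dual0 f : sub_dual S lip_norm f -> f 0 = 0.
Proof.
move=> [Hl _]; have := Hl 0 0 0 0 (Lip0_0 x0) (Lip0_0 x0).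
by rewrite !scaler0 addr0 !mul0r addr0.
Qed.

Lemma dual_sum f (I : Type) (g : I -> M -> X) (c : I -> R) (s : seq I) :
  sub_dual S lip_norm f -> (forall n, S (g n)) ->
  S (\sum_(n <- s) c n *: g n) /\
  f (\sum_(n <- s) c n *: g n) = \sum_(n <- s) c n * f (g n).
Proof.
move=> Hf Hg; elim: s => [|n s [IH1 IH2]].
  by rewrite !big_nil; split; [exact: Lip0_0 | exact: dual0].
rewrite !big_cons; split.
  by have := Lip0_comb (c n) 1 (Hg n) IH1; rewrite scale1r.
case: Hf => Hl _; have := Hl (c n) 1 _ _ (Hg n) IH1.
by rewrite scale1r mul1r IH2.
Qed.

Lemma weak_null f : sub_dual S lip_norm f ->
  exists C, 0 <= C /\ forall (K : nat) (g : 'I_K -> M -> X) B,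
    (forall n, S (g n)) ->
    (forall c : 'I_K -> R, (forall n, `|c n| <= 1) ->
       lip_norm (\sum_n c n *: g n) <= B) ->
    \sum_n `|f (g n)| <= C * B.
Proof.
move=> Hf; have [_ [C HC]] := Hf; exists `|C|; split => // K g B Hg HB.
pose c n := Num.sg (f (g n)).
have [HS Hsum] := @dual_sum f _ g c (index_enum 'I_K) Hf Hg.
have -> : \sum_n `|f (g n)| = f (\sum_n c n *: g n).
  by rewrite Hsum; apply: eq_bigr => n _; rewrite normrEsg.
have [[L HL] _] := HS.
apply: (le_trans (ler_norm _)); apply: (le_trans (HC _ HS)).
have N0 := lip_norm_ge0 (ex_intro _ L HL).
apply: (le_trans (ler_wpM2r N0 (ler_norm C))); apply: ler_wpM2l => //.
apply: HB => n; rewrite normr_sg; by case: (_ != 0).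
Qed.

End DualLemmas.
Section Disjoint.
Context {R : realType} {M : metricType R} {X : normedModType R}.
Local Set Implicit Arguments.

Lemma disj_lip (K : nat) (t : 'I_K -> M) (Rad L : R) (g : 'I_K -> M -> X)
  (c : 'I_K -> R) :
  0 <= L ->
  (forall n m, n != m -> 2 * Rad <= mdist (t n) (t m)) ->
  (forall n z, Rad <= mdist (t n) z -> g n z = 0) ->
  (forall n a b, `|g n a - g n b| <= L * mdist a b) ->
  (forall n, `|c n| <= 1) ->
  forall a b, `|(\sum_n c n *: g n) a - (\sum_n c n *: g n) b| <= (2 * L) * mdist a b.
Proof.
move=> L0 Hsep Hsupp Hlip Hc a b.
rewrite !fct_sumE.
have Fin : forall n z, mdist (t n) z < Rad ->
    \sum_m c m *: g m z = c n *: g n z.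
  move=> n z Hz; rewrite (bigD1 n) //= big1 ?addr0 // => m mn.
  rewrite Hsupp ?scaler0 //.
  have H : 2 * Rad <= mdist (t n) (t m) by apply: Hsep; rewrite eq_sym.
  have := metric_triangle (t n) z (t m); rewrite (metric_sym z (t m)) => H2.
  rewrite leNgt; apply/negP => H3.
  have : mdist (t n) (t m) < 2 * Rad by apply: (le_lt_trans H2); rewrite mulr2n mulrDl mul1r; apply: ltrD.
  by rewrite ltNge H.
have Fout : forall z, (forall n, Rad <= mdist (t n) z) -> \sum_m c m *: g m z = 0.
  by move=> z H; rewrite big1 // => m _; rewrite Hsupp ?scaler0.
have Q : forall z w, ~ (exists n, mdist (t n) z < Rad /\ mdist (t n) w < Rad) ->
    `|\sum_m c m *: g m z| <= L * mdist z w.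
  move=> z w Hnot.
  have [[n Hn]|Hno] := pselect (exists n, mdist (t n) z < Rad).
    rewrite (Fin n z Hn).
    have gw : g n w = 0.
      apply: Hsupp; rewrite leNgt; apply/negP => Hw; apply: Hnot; by exists n.
    rewrite normrZ; apply: le_trans (Hlip n z w); rewrite gw subr0.
    by rewrite -[X in _ <= X]mul1r; apply: ler_wpM2r.
  rewrite Fout ?normr0 ?mulr_ge0 ?mdist_ge0 // => n.
  by rewrite leNgt; apply/negP => Hz; apply: Hno; exists n.
have [[n [Ha Hb]]|Hno] := pselect (exists n, mdist (t n) a < Rad /\ mdist (t n) b < Rad).
  rewrite (Fin n a Ha) (Fin n b Hb) -scalerBr normrZ.
  apply: le_trans (_ : 1 * (L * mdist a b) <= _).
    by apply: ler_pM => //; apply: Hlip.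
  rewrite mul1r -mulrA; apply: ler_peMl; first by rewrite mulr_ge0 ?mdist_ge0.
  by rewrite ler1n.
apply: le_trans (ler_normB _ _) _.
rewrite mulr2n mulrDl mul1r mulrDl; apply: lerD; first exact: Q.
rewrite metric_sym; apply: Q => -[n [H1 H2]]; apply: Hno; by exists n.
Qed.

End Disjoint.
From mathcomp Require Import ring lra.
Section Numeric.
Context {R : realType}.
Lemma leR (a b : R) : a <= b -> a <= b. Proof. by []. Qed.
Lemma ltR (a b : R) : a < b -> a < b. Proof. by []. Qed.
Definition clamp (v : R) := (`|v| - `|v - 1| + 1) / 2.

Lemma clamp_bnd (v : R) : -1 <= `|v| - `|v - 1| <= 1.
Proof.
have := ler_dist_dist v (v - 1).
by rewrite opprB addrCA subrr addr0 normr1 ler_norml.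
Qed.

Lemma clamp_ge0 v : 0 <= clamp v.
Proof. move: (clamp_bnd v) => /andP[H1 H2]; rewrite /clamp; lra. Qed.

Lemma clamp_le1 v : clamp v <= 1.
Proof. move: (clamp_bnd v) => /andP[H1 H2]; rewrite /clamp; lra. Qed.

Lemma clamp1 v : 1 <= v -> clamp v = 1.
Proof.
move=> v1; rewrite /clamp ger0_norm ?ger0_norm; try lra.
Qed.

Lemma clamp0 v : v <= 0 -> clamp v = 0.
Proof.
move=> v0; rewrite /clamp ler0_norm ?ler0_norm; try lra.
Qed.

Lemma clamp_lip (u v : R) : `|clamp u - clamp v| <= `|u - v|.
Proof.
rewrite /clamp.
have E : (`|u| - `|u - 1| + 1) / 2 - (`|v| - `|v - 1| + 1) / 2 =
  ((`|u| - `|v|) - (`|u - 1| - `|v - 1|)) / 2 by field.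
rewrite E normrM (ger0_norm (_ : 0 <= 2^-1)) ?invr_ge0 ?ler0n //.
have H1 := ler_dist_dist u v.
have H2 := ler_dist_dist (u - 1) (v - 1).
have H3 := ler_normB (`|u| - `|v|) (`|u - 1| - `|v - 1|).
move: H2; rewrite (_ : u - 1 - (v - 1) = u - v); last by field.
move=> H2.
have := ler_norm (`|u| - `|v|); have := ler_norm (`|u - 1| - `|v - 1|).
lra.
Qed.

Lemma max_lip (x y r : R) : Num.max x r - Num.max y r <= `|x - y|.
Proof.
rewrite !maxEle; have := ler_norm (x - y); have := ler_norm (y - x); rewrite distrC.
by case: (lerP x r); case: (lerP y r) => ? ? ? ?; lra.
Qed.
End Numeric.
Section Construction.
Context {R : realType} {M : metricType R} {X : normedModType R}.
Context (x0 t : M) (e : X) (Rad del : R).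
Context (HRad : 0 < Rad) (Hdel0 : 0 < del) (Hdel1 : del <= 1)
  (Htx0 : Rad <= mdist t x0) (He : `|e| = 1).

Definition rr := Rad * expR (- (2 / del)).
Definition ss := del * rr / 8.
Definition mm z := Num.max (mdist t z) rr.
Definition rho z := clamp (del / 2 * (ln Rad - ln (mm z))).

Lemma rr_gt0 : 0 < rr.
Proof. by rewrite /rr mulr_gt0 // expR_gt0. Qed.

Lemma rr_le : rr <= Rad.
Proof.
rewrite /rr -[leRHS]mulr1 ler_pM2l // expR_le1 oppr_le0 divr_ge0 //; exact: ltW.
Qed.

Lemma ln_rr : ln rr = ln Rad - 2 / del.
Proof. by rewrite /rr lnM ?expRK // posrE expR_gt0. Qed.

Lemma ss_gt0 : 0 < ss.
Proof. by rewrite /ss divr_gt0 // mulr_gt0 // rr_gt0. Qed.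

Lemma ss_le : ss <= rr.
Proof. rewrite /ss ler_pdivrMr //; have := rr_gt0; move: rr => q q0; have := ler_wpM2r (ltW q0) Hdel1; lra. Qed.

Lemma mm_ge z : mdist t z <= mm z.
Proof. by rewrite /mm le_max lexx. Qed.

Lemma mm_ger z : rr <= mm z.
Proof. by rewrite /mm le_max lexx orbT. Qed.

Lemma mm_gt0 z : 0 < mm z.
Proof. exact: lt_le_trans rr_gt0 (mm_ger z). Qed.

Lemma rho_ge0 z : 0 <= rho z. Proof. exact: clamp_ge0. Qed.
Lemma rho_le1 z : rho z <= 1. Proof. exact: clamp_le1. Qed.

Lemma rho1 z : mdist t z <= rr -> rho z = 1.
Proof.
move=> H; rewrite /rho /mm max_r // ln_rr clamp1 //.
rewrite (_ : del / 2 * (ln Rad - (ln Rad - 2 / del)) = 1) //.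
by field; rewrite gt_eqF.
Qed.

Lemma rho0 z : Rad <= mdist t z -> rho z = 0.
Proof.
move=> H; rewrite /rho /mm max_l; last exact: le_trans rr_le H.
apply: clamp0; apply: mulr_ge0_le0; first by rewrite divr_ge0 // ltW.
rewrite subr_le0 ler_ln // posrE //; exact: lt_le_trans HRad H.
Qed.

Lemma dist_diff a b : `|mdist t b - mdist t a| <= mdist a b.
Proof.
have := metric_triangle t a b; have := metric_triangle t b a.
rewrite (metric_sym b a) => H1 H2.
rewrite ler_norml; apply/andP; split; lra.
Qed.

Lemma rho_key a b : mm a <= mm b ->
  `|rho a - rho b| * mdist t a <= del / 2 * mdist a b.
Proof.
move=> Hab.
have ma0 := mm_gt0 a; have mb0 := mm_gt0 b.
set ma := mm a in Hab ma0 *; set mb := mm b in Hab mb0 *.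
have Hln : ln ma <= ln mb by rewrite ler_ln.
have H1 : `|rho a - rho b| <= del / 2 * (ln mb - ln ma).
  apply: le_trans (clamp_lip _ _) _.
  rewrite (_ : del / 2 * (ln Rad - ln ma) - del / 2 * (ln Rad - ln mb) =
     del / 2 * (ln mb - ln ma)); last by ring.
  rewrite ger0_norm // mulr_ge0 ?subr_ge0 // divr_ge0 //; exact: ltW.
have H2 : ln mb - ln ma <= (mb - ma) / ma.
  rewrite -ln_div ?posrE //.
  rewrite (_ : mb / ma = 1 + (mb - ma) / ma); last by field; rewrite gt_eqF.
  apply: le_ln1Dx; apply: lt_le_trans (_ : 0 <= _); first by rewrite oppr_lt0.
  by rewrite divr_ge0 ?subr_ge0 // ltW.
have H3 : mb - ma <= mdist a b.
  apply: le_trans (max_lip _ _ _) _; exact: dist_diff.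
have H4 : mdist t a <= ma := mm_ge a.
have d0 : 0 <= del / 2 by rewrite divr_ge0 // ltW.
have Hq0 : 0 <= (mb - ma) / ma by rewrite divr_ge0 ?subr_ge0 // ltW.
apply: le_trans (_ : del / 2 * ((mb - ma) / ma) * ma <= _).
  apply: ler_pM => //; last exact: le_trans H1 (ler_wpM2l d0 H2).
  exact: mdist_ge0.
rewrite -mulrA divfK ?gt_eqF //; exact: ler_wpM2l.
Qed.

Lemma sym_bound (F : M -> X) (C : R) :
  (forall a b, mm a <= mm b -> `|F a - F b| <= C * mdist a b) ->
  forall a b, `|F a - F b| <= C * mdist a b.
Proof.
move=> H a b; have [ab|ba] := leP (mm a) (mm b); first exact: H.
by rewrite distrC metric_sym; apply: H; apply: ltW.
Qed.

Lemma lin_id (p q : R) (w u v : X) :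
  p *: (w - u) - q *: (w - v) = (p - q) *: (w - u) + q *: (v - u).
Proof.
rewrite scalerBl -addrA; congr (_ + _).
by rewrite !scalerBr !opprB [RHS]addrC addrA subrK.
Qed.

Definition hfun (y : M -> X) : M -> X :=
  fun z => ((1 - del) * rho z) *: (y t - y z).
Definition xfun (y : M -> X) : M -> X := (1 - del) *: y + hfun y.

Lemma hfun_diff y a b : hfun y a - hfun y b =
  ((1 - del) * rho a - (1 - del) * rho b) *: (y t - y a) +
  ((1 - del) * rho b) *: (y b - y a).
Proof. exact: lin_id. Qed.

Lemma xfun_diff y a b : xfun y a - xfun y b =
  ((1 - del) * rho a - (1 - del) * rho b) *: (y t - y a) +
  ((1 - del) - (1 - del) * rho b) *: (y a - y b).
Proof.
have -> : xfun y a - xfun y b = (1 - del) *: y a + hfun y a - ((1 - del) *: y b + hfun y b) by [].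
rewrite opprD addrACA hfun_diff.
have E : (1 - del) *: y a - (1 - del) *: y b + ((1 - del) * rho b) *: (y b - y a)
  = (1 - del - (1 - del) * rho b) *: (y a - y b).
  by rewrite -scalerBr [RHS]scalerBl -scalerN opprB.
by rewrite -E addrCA.
Qed.

Section WithY.
Variable y : M -> X.
Hypothesis Hy : forall a b, `|y a - y b| <= mdist a b.

Lemma first_term a b : mm a <= mm b ->
  `|((1 - del) * rho a - (1 - del) * rho b) *: (y t - y a)| <=
    (1 - del) * (del / 2) * mdist a b.
Proof.
move=> Hab; rewrite normrZ -mulrBr normrM (ger0_norm (_ : 0 <= 1 - del));
  last by rewrite subr_ge0.
rewrite -!mulrA; apply: ler_wpM2l; first by rewrite subr_ge0.
rewrite mulrA; apply: le_trans (_ : _ <= `|rho a - rho b| * mdist t a) (rho_key a b Hab).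
apply: ler_wpM2l => //; exact: Hy.
Qed.

Lemma hfun_lip a b : `|hfun y a - hfun y b| <= 2 * mdist a b.
Proof.
move: a b; apply: sym_bound => a b Hab.
rewrite hfun_diff; apply: le_trans (ler_normD _ _) _.
have d0 := mdist_ge0 a b.
have H1 := first_term a b Hab.
have hk : 0 <= 1 - del by rewrite subr_ge0.
have hk1 : 1 - del <= 1 by apply: leR; have := Hdel0; lra.
have hkp : (1 - del) * rho b <= 1.
  rewrite -[leRHS]mul1r; apply: ler_pM => //; [exact: rho_ge0 | exact: rho_le1].
have H2 : `|((1 - del) * rho b) *: (y b - y a)| <= mdist a b.
  rewrite normrZ ger0_norm; last exact: mulr_ge0 hk (rho_ge0 b).
  apply: le_trans (_ : 1 * mdist a b <= _); last by rewrite mul1r.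
  apply: ler_pM => //; first exact: mulr_ge0 hk (rho_ge0 b).
  by have := Hy b a; rewrite (metric_sym b a).
have H3 : (1 - del) * (del / 2) * mdist a b <= mdist a b.
  rewrite -[leRHS]mul1r; apply: ler_wpM2r => //.
  rewrite -[leRHS]mul1r; have := Hdel0; have := Hdel1 => h1 h0.
  apply: ler_pM; apply: leR; lra.
lra.
Qed.

Lemma xfun_lip a b : `|xfun y a - xfun y b| <= (1 - del / 2) * mdist a b.
Proof.
move: a b; apply: sym_bound => a b Hab.
rewrite xfun_diff; apply: le_trans (ler_normD _ _) _.
have d0 := mdist_ge0 a b.
have H1 := first_term a b Hab.
have hk : 0 <= 1 - del by rewrite subr_ge0.
have hc0 : 0 <= (1 - del) - (1 - del) * rho b.
  rewrite subr_ge0 -[leRHS]mulr1; apply: ler_wpM2l => //; exact: rho_le1.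
have hc1 : (1 - del) - (1 - del) * rho b <= 1 - del.
  rewrite lerBlDr lerDl; exact: mulr_ge0 hk (rho_ge0 b).
have H2 : `|((1 - del) - (1 - del) * rho b) *: (y a - y b)| <= (1 - del) * mdist a b.
  rewrite normrZ ger0_norm //; apply: ler_pM => //; exact: Hy.
have H3 : (1 - del) * (del / 2) * mdist a b + (1 - del) * mdist a b <=
   (1 - del / 2) * mdist a b.
  rewrite -mulrDl; apply: ler_wpM2r => //.
  have : 0 <= del * del by rewrite mulr_ge0 // ltW.
  have := Hdel0; have := Hdel1 => h1 h0 h2; apply: leR; lra.
lra.
Qed.

End WithY.

Definition bmp z := Num.max 0 (ss - mdist t z).
Definition phi : M -> X := fun z => bmp z *: e.

Lemma bmp_ge0 z : 0 <= bmp z.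
Proof. by rewrite /bmp le_max lexx. Qed.

Lemma bmp0 z : ss <= mdist t z -> bmp z = 0.
Proof. by move=> H; rewrite /bmp max_l // subr_le0. Qed.

Lemma bmp_lt z : mdist t z < ss -> bmp z = ss - mdist t z.
Proof. by move=> H; rewrite /bmp max_r // subr_ge0 ltW. Qed.

Lemma bmp_lip a b : `|bmp a - bmp b| <= mdist a b.
Proof.
have H1 := max_lip (ss - mdist t a) (ss - mdist t b) 0.
have H2 := max_lip (ss - mdist t b) (ss - mdist t a) 0.
have H3 := dist_diff a b.
rewrite /bmp !(maxC 0); move: H1 H2; set p := Num.max _ 0; set q := Num.max _ 0.
rewrite (_ : ss - mdist t a - (ss - mdist t b) = mdist t b - mdist t a); last by ring.
rewrite (_ : ss - mdist t b - (ss - mdist t a) = - (mdist t b - mdist t a)); last by ring.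
rewrite normrN => H1 H2; rewrite ler_norml; apply/andP; split; apply: leR; lra.
Qed.

Lemma phi_diff a b : phi a - phi b = (bmp a - bmp b) *: e.
Proof. by rewrite /phi scalerBl. Qed.

Lemma phi_lip a b : `|phi a - phi b| <= mdist a b.
Proof. by rewrite phi_diff normrZ He mulr1 bmp_lip. Qed.

Lemma phi_out z : Rad <= mdist t z -> phi z = 0.
Proof.
move=> H; rewrite /phi bmp0 ?scale0r //.
exact: le_trans ss_le (le_trans rr_le H).
Qed.

Lemma hfun_out y z : Rad <= mdist t z -> hfun y z = 0.
Proof. by move=> H; rewrite /hfun rho0 // mulr0 scale0r. Qed.

Lemma xfun_ball y z : mdist t z <= rr -> xfun y z = (1 - del) *: y t.
Proof.
move=> H; change ((1 - del) *: y z + ((1 - del) * rho z) *: (y t - y z) = (1 - del) *: y t).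
by rewrite rho1 // mulr1 -scalerDr addrCA subrr addr0.
Qed.

Lemma xfun_x0 y : y x0 = 0 -> xfun y x0 = 0.
Proof.
move=> y0; change ((1 - del) *: y x0 + hfun y x0 = 0).
by rewrite y0 scaler0 add0r hfun_out.
Qed.

Lemma phi_x0 : phi x0 = 0.
Proof. exact: phi_out. Qed.

Lemma xphi_lip y (sg : R) : (forall a b, `|y a - y b| <= mdist a b) -> `|sg| <= 1 ->
  forall a b, `|(xfun y a + sg *: phi a) - (xfun y b + sg *: phi b)| <= mdist a b.
Proof.
move=> Hy Hsg.
have key : forall a b, mdist t a <= mdist t b ->
    `|(xfun y a + sg *: phi a) - (xfun y b + sg *: phi b)| <= mdist a b.
  move=> a b Hab.
  rewrite opprD addrACA -scalerBr.
  have d0 := mdist_ge0 a b.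
  have [Hb|Hb] := leP (mdist t b) rr.
    rewrite !xfun_ball //; last exact: le_trans Hab Hb.
    rewrite subrr add0r normrZ -[leRHS]mul1r; apply: ler_pM => //.
    exact: phi_lip.
  have phib : phi b = 0.
    by rewrite /phi bmp0 ?scale0r //; apply: ltW; apply: le_lt_trans ss_le Hb.
  rewrite phib subr0.
  have Lx := xfun_lip y Hy.
  have [Ha|Ha] := leP ss (mdist t a).
    have phia : phi a = 0 by rewrite /phi bmp0 ?scale0r.
    rewrite phia scaler0 addr0; apply: le_trans (Lx a b) _.
    rewrite -[leRHS]mul1r; apply: ler_wpM2r => //.
    by rewrite lerBlDr lerDl divr_ge0 // ltW.
  apply: le_trans (ler_normD _ _) _.
  have xa : xfun y a = xfun y t.
    rewrite !xfun_ball // ?mdistxx ?(ltW rr_gt0) //.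
    exact: le_trans (ltW Ha) ss_le.
  have hpa : `|sg *: phi a| = `|sg| * (ss - mdist t a).
    by rewrite normrZ /phi normrZ He mulr1 bmp_lt // (ger0_norm (_ : 0 <= ss - mdist t a)) // subr_ge0 ltW.
  rewrite xa hpa.
  have H1 := Lx t b.
  have H2 := metric_triangle t a b.
  have hL : 0 <= 1 - del / 2 by rewrite subr_ge0; apply: leR; have := Hdel1; lra.
  have H3 := ler_wpM2l hL H2.
  have H4 : rr <= mdist t a + mdist a b by apply: le_trans (ltW Hb) H2.
  have H5 := ler_wpM2l (_ : 0 <= del / 2) H4.
  have H6 : ss <= del / 2 * rr.
    rewrite /ss; have := mulr_gt0 Hdel0 rr_gt0 => h; apply: leR; lra.
  have hs : 0 <= ss - mdist t a by rewrite subr_ge0 ltW.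
  have := mdist_ge0 t a.
  have Hs1 : `|sg| * (ss - mdist t a) <= ss - mdist t a.
    by rewrite -[leRHS]mul1r; apply: ler_wpM2r.
  have := Hdel0; move=> hd0 hta.
  apply: leR; move: H1 H3 H5 H6 Hs1; rewrite !mulrDr; lra.
move=> a b; have [ab|ba] := leP (mdist t a) (mdist t b); first exact: key.
by rewrite distrC metric_sym; apply: key; apply: ltW.
Qed.

Lemma phi_norm_ge1 : cluster_points M t -> 1 <= lip_norm phi.
Proof.
move=> Ht; have [a [na Ha]] := Ht ss ss_gt0.
have Lphi : lipschitz_map phi by exists 1 => u v; rewrite mul1r phi_lip.
have ta : t != a by rewrite eq_sym.
have d0 : 0 < mdist t a by rewrite mdist_gt0.
have := @lip_ge R M X phi t a Lphi ta.
rewrite phi_diff normrZ He mulr1 bmp_lt ?mdistxx ?ss_gt0 // bmp_lt //.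
by rewrite subr0 opprB addrCA subrr addr0 ger0_norm ?mdist_ge0 // divff // gt_eqF.
Qed.
End Construction.

Section Aux.
Context {R : realType}.

Lemma pos_lb (I : finType) (a : I -> R) : (forall i, 0 < a i) ->
  exists d : R, 0 < d /\ forall i, d <= a i.
Proof.
move=> Ha; have S0 : 0 <= \sum_i (a i)^-1.
  by apply: sumr_ge0 => i _; rewrite invr_ge0 ltW.
have P0 : 0 < 1 + \sum_i (a i)^-1 by apply: lt_le_trans (ltr01) _; rewrite lerDl.
exists (1 + \sum_i (a i)^-1)^-1; split; first by rewrite invr_gt0.
move=> i; rewrite -[a i]invrK lef_pV2 ?posrE ?invr_gt0 //.
rewrite (bigD1 i) //= addrCA lerDl; apply: addr_ge0 => //.
by apply: sumr_ge0 => j _; rewrite invr_ge0 ltW.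
Qed.

Lemma pick_points (M : metricType R) (A : set M) (p : M) (K : nat) :
  infinite_set A -> exists t : 'I_K -> M,
    (forall n, A (t n)) /\ (forall n m, t n = t m -> n = m).
Proof.
move=> /(infinite_set_fset K) [B BA HB].
exists (fun n : 'I_K => nth p (finmap.enum_fset B) n); split.
  move=> n; apply: BA => /=; apply: mem_nth; exact: leq_trans (ltn_ord n) HB.
move=> n m /eqP; rewrite nth_uniq.
- by move/eqP/val_inj.
- exact: leq_trans (ltn_ord n) HB.
- exact: leq_trans (ltn_ord m) HB.
- exact: finmap.fset_uniq.
Qed.

End Aux.

Lemma Lip0_scale {R : realType} {M : metricType R} {X : normedModType R} (x0 : M)
  (a : R) (z : M -> X) : Lip0 x0 z -> Lip0 x0 (a *: z).
Proof. by move=> Hz; have := Lip0_comb a 0 Hz Hz; rewrite scale0r addr0. Qed.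

Lemma Lip0_lip1 {R : realType} {M : metricType R} {X : normedModType R} (x0 : M)
  (y : M -> X) : Lip0 x0 y -> lip_norm y <= 1 ->
  forall a b, `|y a - y b| <= mdist a b.
Proof.
move=> [Ly _] N1 a b; apply: le_trans (lipE a b Ly) _.
by rewrite -[leRHS]mul1r ler_wpM2r // mdist_ge0.
Qed.

Theorem theorem4p5 (R : realType) (M : metricType R) (x0 : M)
  (X : completeNormedModType R) :
  infinite_set (cluster_points M) ->
  (exists x : X, x != 0) ->
  SSD2P (Lip0 (X := X) x0) lip_norm.
Proof.
move=> Hinf [e0 He0] k f alpha eps Hf Ha Heps.
pose e := `|e0|^-1 *: e0.
have He : `|e| = 1.
  rewrite /e normrZ ger0_norm ?invr_ge0 // mulVf //.
  by rewrite normr_eq0.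
have [del [del0 Hdel]] : exists d : R, 0 < d /\ forall o : option 'I_k,
    d <= (if o is Some i then alpha i / 4 else 1).
  by apply: pos_lb; case => [i|] //=; rewrite divr_gt0.
have del1 : del <= 1 := Hdel None.
have delA : forall i, del <= alpha i / 4 := fun i => Hdel (Some i).
pose eta := del / 8.
have eta0 : 0 < eta by rewrite divr_gt0.
have fub : forall i z, sub_ball (Lip0 x0) lip_norm z -> f i z <= 1.
  move=> i z Hz; have [[_ [C HC]] Hn] := Hf i.
  apply: le_trans (ler_norm _) _; rewrite -Hn; apply: ub_le_sup; last by exists z.
  exists `|C| => r [w [Sw Nw] <-]; apply: le_trans (HC w Sw) _.
  have [[Lw HLw] _] := Sw; have N0 := lip_norm_ge0 (ex_intro _ Lw HLw).
  apply: le_trans (ler_wpM2r N0 (ler_norm C)) _.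
  by rewrite -[leRHS]mulr1 ler_wpM2l.
have Hy : forall i, exists y, [/\ Lip0 x0 y, lip_norm y <= 1 & 1 - alpha i / 2 < f i y].
  move=> i; have [[Hl HC] Hn] := Hf i.
  have ne : [set `|f i z| | z in sub_ball (Lip0 x0) lip_norm] !=set0.
    exists `|f i 0|, 0; split; [exact: Lip0_0 | ].
    apply: lip_le => [a b|//].
    rewrite (_ : (0 : M -> X) a - (0 : M -> X) b = 0) ?normr0 ?mulr_ge0 ?mdist_ge0 //.
    exact: subrr.
  have lt1 : 1 - alpha i / 2 < sub_dual_norm (Lip0 x0) lip_norm (f i).
    by rewrite Hn ltrBlDr ltrDl divr_gt0.
  have [r [z [Sz Nz] <-] Hr] := sup_gt ne lt1.
  have [fz0|fz0] := leP 0 (f i z).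
    by exists z; split => //; rewrite ger0_norm in Hr.
  exists ((-1) *: z); split.
  - exact: Lip0_scale.
  - have [[Lz HLz] _] := Sz.
    apply: le_trans Nz; apply: lip_le; last exact: lip_norm_ge0 (ex_intro _ Lz HLz).
    move=> a b; rewrite (_ : ((-1) *: z) a - ((-1) *: z) b = - (z a - z b)).
      by rewrite normrN; apply: lipE; exists Lz.
    change ((-1) *: z a - (-1) *: z b = - (z a - z b)).
    by rewrite !scaleN1r opprK opprB addrC.
  - have := Hl (-1) 0 z z Sz Sz; rewrite scale0r addr0 mul0r addr0 => ->.
    by rewrite ltr0_norm // in Hr; rewrite mulN1r.
have [y Hyi] := choice Hy.
have Sy : forall i, Lip0 x0 (y i) by move=> i; have [] := Hyi i.
have Ny : forall i, lip_norm (y i) <= 1 by move=> i; have [] := Hyi i.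
have fy : forall i, 1 - alpha i / 2 < f i (y i) by move=> i; have [] := Hyi i.
have Ly : forall i a b, `|y i a - y i b| <= mdist a b.
  by move=> i; apply: Lip0_lip1 (Sy i) (Ny i).
have [C HC] := choice (fun i => weak_null (Hf i).1).
have C0 : forall i, 0 <= C i by move=> i; have [] := HC i.
pose T := \sum_i (C i * (2 * 2) + C i * (2 * 1)).
pose K := (Num.trunc (T / eta)).+1.
have KT : T < K%:R * eta.
  by rewrite -ltr_pdivrMr // truncnS_gt.
have [t [tA tinj]] := @pick_points R M _ x0 K
  (infinite_setD Hinf (finite_set1 x0)).
have tcl : forall n, cluster_points M (t n) by move=> n; have [] := tA n.
have tx0 : forall n, t n != x0 by move=> n; have [_ /eqP] := tA n.
have [Rad [Rad0 HRad]] : exists d : R, 0 < d /\ forall nm : 'I_K * 'I_K,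
    d <= (if nm.1 == nm.2 then mdist (t nm.1) x0 else mdist (t nm.1) (t nm.2) / 2).
  apply: pos_lb; move=> [n m] /=; case: eqP => [_|nm].
    by rewrite mdist_gt0.
  rewrite divr_gt0 // mdist_gt0; apply/eqP => /tinj; exact: nm.
have Rx0 : forall n, Rad <= mdist (t n) x0.
  by move=> n; have := HRad (n, n); rewrite /= eqxx.
have Rsep : forall n m, n != m -> 2 * Rad <= mdist (t n) (t m).
  move=> n m nm; have := HRad (n, m); rewrite /= (negbTE nm).
  by rewrite ler_pdivlMr // mulrC.
pose h i n := hfun (t n) Rad del (y i).
pose ph n := phi (t n) e Rad del.
have Sh : forall i n, Lip0 x0 (h i n).
  move=> i n; split.
    exists 2 => a b; exact: (hfun_lip (t n) Rad del Rad0 del0 del1 (y i) (Ly i) a b).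
  exact: (hfun_out (t n) Rad del Rad0 del0 (y i) x0 (Rx0 n)).
have Sph : forall n, Lip0 x0 (ph n).
  move=> n; split.
    by exists 1 => a b; rewrite mul1r; exact: (phi_lip (t n) e Rad del He a b).
  exact: (phi_out (t n) e Rad del Rad0 del0 del1 x0 (Rx0 n)).
have sumh : forall i, \sum_n `|f i (h i n)| <= C i * (2 * 2).
  move=> i; have [_ HCi] := HC i; apply: HCi => // c Hc.
  apply: lip_le; last by rewrite mulr_ge0 ?ler0n.
  move=> a b; apply: (@disj_lip R M X K t Rad 2 (h i) c) => //.
  - move=> n z Hz; exact: (hfun_out (t n) Rad del Rad0 del0 (y i) z Hz).
  - move=> n a' b'; exact: (hfun_lip (t n) Rad del Rad0 del0 del1 (y i) (Ly i) a' b').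
have sumph : forall i, \sum_n `|f i (ph n)| <= C i * (2 * 1).
  move=> i; have [_ HCi] := HC i; apply: HCi => // c Hc.
  apply: lip_le; last by rewrite mulr_ge0 ?ler0n.
  move=> a b; apply: (@disj_lip R M X K t Rad 1 ph c) => //.
  - move=> n z Hz; exact: (phi_out (t n) e Rad del Rad0 del0 del1 z Hz).
  - move=> n a' b'; rewrite mul1r; exact: (phi_lip (t n) e Rad del He a' b').
have [n Hn] : exists n : 'I_K, \sum_i (`|f i (h i n)| + `|f i (ph n)|) < eta.
  apply: contrapT => Hno.
  have Hall : forall n : 'I_K, eta <= \sum_i (`|f i (h i n)| + `|f i (ph n)|).
    move=> n; rewrite leNgt; apply/negP => H; apply: Hno; by exists n.
  have : K%:R * eta <= T.
    apply: le_trans (_ : \sum_(n < K) \sum_i (`|f i (h i n)| + `|f i (ph n)|) <= T).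
      apply: le_trans (_ : \sum_(n < K) eta <= _); last exact: ler_sum.
      by rewrite sumr_const card_ord mulr_natl.
    rewrite exchange_big /T; apply: ler_sum => i _; rewrite big_split /=.
    exact: lerD.
  by rewrite leNgt KT.
have small : forall i, `|f i (h i n)| < eta /\ `|f i (ph n)| < eta.
  move=> i; have Hle : `|f i (h i n)| + `|f i (ph n)| <=
      \sum_i (`|f i (h i n)| + `|f i (ph n)|).
    rewrite (bigD1 i) //= lerDl; apply: sumr_ge0 => j _; exact: addr_ge0.
  have := lt_le_trans (le_lt_trans Hle Hn) (lexx eta).
  have := normr_ge0 (f i (h i n)); have := normr_ge0 (f i (ph n)).
  move=> h1 h2 h3; split; apply: ltR; lra.
pose x i := xfun (t n) Rad del (y i).
have Sx : forall i, Lip0 x0 (x i).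
  by move=> i; have := Lip0_comb (1 - del) 1 (Sy i) (Sh i n); rewrite scale1r.
have slice_sg : forall i (sg : R), `|sg| <= 1 ->
    slice (Lip0 x0) lip_norm (f i) (alpha i) (x i + sg *: ph n).
  move=> i sg Hsg.
  have Sxs : Lip0 x0 (x i + sg *: ph n).
    by have := Lip0_comb 1 sg (Sx i) (Sph n); rewrite scale1r.
  split; first split => //.
    apply: lip_le => // a b; rewrite mul1r.
    exact: (xphi_lip (t n) e Rad del Rad0 del0 del1 He (y i) sg (Ly i) Hsg a b).
  have [[Hl _] _] := Hf i.
  have E1 := Hl 1 sg (x i) (ph n) (Sx i) (Sph n); rewrite scale1r mul1r in E1.
  have E2 := Hl (1 - del) 1 (y i) (h i n) (Sy i) (Sh i n).
  rewrite scale1r mul1r in E2.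
  have E3 : f i (x i) = (1 - del) * f i (y i) + f i (h i n) by exact: E2.
  rewrite E1 E3.
  have [sh sph] := small i.
  have H1 := fy i.
  have H2 : del * f i (y i) <= del * 1.
    by apply: ler_wpM2l; [exact: ltW | apply: fub; split].
  have H3 : - f i (h i n) <= `|f i (h i n)| by rewrite -normrN ler_norm.
  have H4 : - (sg * f i (ph n)) <= `|f i (ph n)|.
    apply: le_trans (ler_norm _) _; rewrite normrN normrM.
    by rewrite -[leRHS]mul1r ler_wpM2r.
  have H5 := delA i.
  rewrite /eta in sh sph; apply: ltR; move: H1 H2 H3 H4 H5 sh sph; lra.
exists x, (ph n); split.
- by move=> i; have := slice_sg i 0; rewrite normr0 ler01 scale0r addr0; apply.
- split; first exact: Sph n.
  apply: lip_le => // a b; rewrite mul1r; exact: (phi_lip (t n) e Rad del He a b).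
- apply: lt_le_trans (phi_norm_ge1 (t n) e Rad del Rad0 del0 He (tcl n)).
  by rewrite ltrBlDr ltrDl.
- move=> i; split.
    by have := slice_sg i 1; rewrite normr1 lexx scale1r; apply.
  by have := slice_sg i (-1); rewrite normrN normr1 lexx scaleN1r; apply.
Qed.
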